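(* Let $X$ and $Y$ be objects of an $R$-linear triangulated category $\mathsf{T}$ with $\operatorname{Hom}^*_{\mathsf{T}}(X,Y)$ in $\mathsf{art}^{\mathsf{fl}}(R)$, and let $z\in R^d$. If for all $n\ll0$ there are short exact sequences $$0\to\operatorname{Hom}_{\mathsf{T}}(X,\Sigma^n(Y/\!\!/z))\to\operatorname{Hom}_{\mathsf{T}}(X,\Sigma^{n+1}Y)\to\operatorname{Hom}_{\mathsf{T}}(X,\Sigma^{n+d+1}Y)\to0$$ (of $R^0$-modules), then $h(X,Y/\!\!/z)(n)=h(X,Y)(n+d+1)-h(X,Y)(n+1)$ for all $n\ll0$, and for every $s\ge1$ one has $\Delta^{-s+1}h(X,Y/\!\!/z)(n)=-\Delta^{-s}h(X,Y)(n)$ for all $n\ll0$.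
   Context: $R=\bigoplus_{n\ge 0}R^n$ is a graded-commutative Noetherian ring generated over $R^0$ by $R^d$, $d\ge2$ even (standing assumption). $\mathsf{T}$ is a triangulated category with suspension $\Sigma$ that is $R$-linear: a graded ring homomorphism $\phi$ from $R$ to the graded center of $\mathsf{T}$ (degree-$n$ elements: natural transformations $\eta:\mathrm{id}\to\Sigma^n$ with $\eta\Sigma=(-1)^n\Sigma\eta$), giving $\phi_Y:R\to\operatorname{Hom}^*_{\mathsf{T}}(Y,Y)$ and making $\operatorname{Hom}^*_{\mathsf{T}}(X,Y)=\bigoplus_n\operatorname{Hom}_{\mathsf{T}}(X,\Sigma^nY)$ a graded $R$-module. $\lambda^n(X,Y)=\ell_{R^0}\operatorname{Hom}_{\mathsf{T}}(X,\Sigma^nY)$. $\mathsf{art}^{\mathsf{fl}}(R)$: $\bigoplus_{n\le n_0}\operatorname{Hom}_{\mathsf{T}}(X,\Sigma^nY)$ is Artinian over $R$ for some $n_0$ and all $\lambda^n(X,Y)<\infty$. $Y/\!\!/z$ is defined by a distinguished triangle $Y\xrightarrow{\phi_Y(z)}\Sigma^dY\to Y/\!\!/z\to\Sigma Y$. $h(X,Y)(n)=\sum_{i=0}^{d-1}(-1)^{n+i}\lambda^{n+i}(X,Y)$. Negative difference operator: $\Delta^{-1}f(n)=f(n+1)-f(n+d+1)$, $\Delta^0f=f$, $\Delta^{-s}f=\Delta^{-1}(\Delta^{-s+1}f)$ for $s\ge1$. *)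

(* Defs.v *)
From HB Require Import structures.
From mathcomp Require Import all_boot all_order all_algebra.
Set Implicit Arguments. Unset Strict Implicit. Unset Printing Implicit Defensive.
Import Order.TTheory GRing.Theory Num.Theory.
Local Open Scope ring_scope.

Definition is_submod (R : comPzRingType) (M : lmodType R) (P : M -> Prop) : Prop :=
  [/\ P 0, (forall x y, P x -> P y -> P (x + y)) & (forall (a : R) x, P x -> P (a *: x))].

Definition strict_chain (R : comPzRingType) (M : lmodType R) (k : nat)
    (c : nat -> M -> Prop) : Prop :=
  (forall i, (i <= k)%N -> is_submod (c i)) /\
  (forall i, (i < k)%N ->
     (forall x, c i x -> c i.+1 x) /\ (exists x, c i.+1 x /\ ~ c i x)).

(* ell_R(M) = k : the supremum of the lengths of strict chains of submodules
   is finite and equals k (composition length). *)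
Definition has_length (R : comPzRingType) (M : lmodType R) (k : nat) : Prop :=
  (exists c : nat -> M -> Prop, strict_chain k c) /\
  (forall j (c : nat -> M -> Prop), strict_chain j c -> (j <= k)%N).

Definition short_exact (R : comPzRingType) (A B C : lmodType R)
    (f : {linear A -> B}) (g : {linear B -> C}) : Prop :=
  [/\ injective f,
      (forall y, (exists x, f x = y) <-> g y = 0)
    & (forall w, exists y, g y = w)].

Definition hfun (d : nat) (lam : int -> nat) (n : int) : int :=
  \sum_(i < d) (-1) ^ (n + (i : nat)%:Z) * (lam (n + (i : nat)%:Z))%:Z.

Definition negdiff (d : nat) (f : int -> int) (n : int) : int :=
  f (n + 1) - f (n + d%:Z + 1).

Fixpoint negdiff_iter (d s : nat) (f : int -> int) : int -> int :=
  match s with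
  | 0 => f
  | s'.+1 => negdiff d (negdiff_iter d s' f)
  end.

(* Main.v *)
Require Import Defs.
From HB Require Import structures.
From mathcomp Require Import all_boot all_order all_algebra.
From mathcomp Require Import zify ring.
From Stdlib Require Import Classical.
Import Order.TTheory GRing.Theory Num.Theory.
Local Open Scope ring_scope.

Lemma chain_extend (R : comPzRingType) (M : lmodType R) (m : nat)
  (e : nat -> M -> Prop) (P Q : M -> Prop) :
  strict_chain m e -> (forall x, e m x <-> P x) -> is_submod Q ->
  (forall x, P x -> Q x) ->
  exists p' (e' : nat -> M -> Prop), strict_chain p' e' /\
    (forall x, e' p' x <-> Q x) /\ (m <= p')%N /\
    ((exists x, Q x /\ ~ P x) -> p' = m.+1).
Proof.
move=> [Hsub Hst] He HQ HPQ.
case: (classic (exists x, Q x /\ ~ P x)) => [ex|nex].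
- exists m.+1, (fun i => if (i <= m)%N then e i else Q); split; last first.
    by rewrite ltnn; split => //.
  split.
    by move=> i Hi; case: ifP => Him; [apply: Hsub|].
  move=> i Hi; have Him : (i <= m)%N by [].
  rewrite /= Him.
  case: (ltnP i m) => Hlt.
    exact: Hst.
  have Hieq : i = m by apply/eqP; rewrite eqn_leq Him Hlt.
  subst i; split.
    by move=> x /He /HPQ.
  by case: ex => x [Qx nPx]; exists x; split => // /He.
- exists m, e; split; first by split.
  split; last by split.
  move=> x; split; first by move=> /He /HPQ.
  move=> Qx; apply/He; apply: NNPP => nPx; apply: nex; by exists x.
Qed.

Arguments chain_extend {R M m e P Q}.

Lemma submod_preim (R : comPzRingType) (A B : lmodType R) (f : {linear A -> B})
  (P : B -> Prop) : is_submod P -> is_submod (fun x => P (f x)).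
Proof.
move=> [P0 PD PZ]; split.
- by rewrite linear0.
- by move=> x y Px Py; rewrite linearD; apply: PD.
- by move=> a x Px; rewrite linearZ; apply: PZ.
Qed.

Arguments submod_preim {R A B} f {P}.

Lemma submod_img (R : comPzRingType) (A B : lmodType R) (f : {linear A -> B})
  (P : A -> Prop) : is_submod P -> is_submod (fun y => exists x, P x /\ f x = y).
Proof.
move=> [P0 PD PZ]; split.
- by exists 0; rewrite linear0.
- move=> _ _ [x [Px <-]] [y [Py <-]]; exists (x + y); split; first exact: PD.
  by rewrite linearD.
- move=> a _ [x [Px <-]]; exists (a *: x); split; first exact: PZ.
  by rewrite linearZ.
Qed.

Arguments submod_img {R A B} f {P}.

Lemma ses_le (R : comPzRingType) (A B C : lmodType R)
  (f : {linear A -> B}) (g : {linear B -> C}) a c j (b : nat -> B -> Prop) :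
  short_exact f g -> has_length A a -> has_length C c -> strict_chain j b ->
  (j <= a + c)%N.
Proof.
move=> [finj fker gsurj] [_ HA] [_ HC] Hb.
have Hb' := Hb; case: Hb' => [bsub bst].
suff: forall k, (k <= j)%N -> exists p q (eA : nat -> A -> Prop) (eC : nat -> C -> Prop),
   [/\ strict_chain p eA, (forall x, eA p x <-> b k (f x)), strict_chain q eC,
       (forall z, eC q z <-> exists y, b k y /\ g y = z) & (k <= p + q)%N].
  move=> /(_ j (leqnn j)) [p [q [eA [eC [HeA _ HeC _ Hk]]]]].
  apply: (leq_trans Hk); apply: leq_add; [exact: HA HeA | exact: HC HeC].
elim=> [|k IH] Hk.
  exists 0%N, 0%N, (fun _ x => b 0%N (f x)), (fun _ z => exists y, b 0%N y /\ g y = z).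
  split => //.
  - split => // i _; first by apply: submod_preim; apply: bsub.
  - split => // i _; first by apply: submod_img; apply: bsub.
have [p [q [eA [eC [HeA HeAe HeC HeCe Hkpq]]]]] := IH (ltnW Hk).
have [Hincl Hstr] := bst k Hk.
have bk1 := bsub k.+1 Hk.
have bk := bsub k (ltnW Hk).
have [p' [eA' [HeA' [HeA'e [Hpp' Hp'S]]]]] :=
  chain_extend HeA HeAe (submod_preim f bk1) (fun x => Hincl (f x)).
have [q' [eC' [HeC' [HeC'e [Hqq' Hq'S]]]]] :=
  chain_extend HeC HeCe (submod_img g bk1)
    (fun z '(ex_intro y (conj Py Hy)) => ex_intro _ y (conj (Hincl y Py) Hy)).
exists p', q', eA', eC'; split => //.
case: (classic (exists x, b k.+1 (f x) /\ ~ b k (f x))) => [exA|nexA].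
  by rewrite (Hp'S exA) addSn ltnS; apply: leq_trans (leq_add (leqnn _) Hqq').
case: (classic (exists z, (exists y, b k.+1 y /\ g y = z) /\ ~ (exists y, b k y /\ g y = z))) => [exC|nexC].
  by rewrite (Hq'S exC) addnS ltnS; apply: leq_trans (leq_add Hpp' (leqnn _)).
exfalso; case: Hstr => x [bx nbx]; apply: nbx.
have : exists y, b k y /\ g y = g x.
  apply: NNPP => H; apply: nexC; exists (g x); split => //; by exists x.
move=> [y [by0 gy]].
have : g (x - y) = 0 by rewrite linearB gy subrr.
move=> /fker [u fu].
have Hbu : b k (f u).
  apply: NNPP => H; apply: nexA; exists u; split => //.
  rewrite fu; case: bk1 => _ PD PZ; apply: PD => //.
  rewrite -scaleN1r; apply: PZ; exact: Hincl.
have -> : x = y + f u by rewrite fu addrC subrK.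
by case: bk => _ PD _; apply: PD.
Qed.
Arguments ses_le {R A B C f g a c j b}.

Lemma ses_ge (R : comPzRingType) (A B C : lmodType R)
  (f : {linear A -> B}) (g : {linear B -> C}) a c
  (eA : nat -> A -> Prop) (eC : nat -> C -> Prop) :
  short_exact f g -> strict_chain a eA -> strict_chain c eC ->
  strict_chain (a + c) (fun i => if (i <= a)%N then (fun y => exists x, eA i x /\ f x = y)
                                 else (fun y => eC (i - a)%N (g y))).
Proof.
move=> [finj fker gsurj] [Asub Ast] [Csub Cst]; split.
  move=> i Hi; case: ifP => Hia.
    by apply: submod_img; apply: Asub.
  by apply: submod_preim; apply: Csub; lia.
move=> i Hi /=.
case: (ltnP i a) => Hia.
  rewrite ltnW //.
  have [Hin [x [x1 nx]]] := Ast i Hia; split.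
    by move=> _ [u [Hu <-]]; exists u; split => //; apply: Hin.
  exists (f x); split; first by exists x.
  by move=> [u [Hu /finj Hux]]; apply: nx; rewrite -Hux.
case: (eqVneq i a) => [Hia'|Hia'].
  subst i; rewrite leqnn subSnn.
  have [Hin [w [w1 nw]]] := Cst 0%N (ltac:(lia)).
  have [C0 _ _] := Csub 0%N (leq0n _).
  have [C1 _ _] := Csub 1%N (ltac:(lia)).
  split.
    move=> _ [u [Hu <-]].
    have -> : g (f u) = 0 by apply/fker; exists u.
    exact: C1.
  have [y gy] := gsurj w.
  exists y; split; first by rewrite gy.
  move=> [u [_ fu]]; apply: nw.
  have : g y = 0 by apply/fker; exists u.
  by rewrite gy => ->.
have Hia2 : (a < i)%N by rewrite ltn_neqAle eq_sym Hia' Hia.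
rewrite (leqNgt i a) Hia2 /=.
have -> : (i.+1 - a = (i - a).+1)%N by lia.
have [Hin [w [w1 nw]]] := Cst (i - a)%N (ltac:(lia)).
split; first by move=> y; apply: Hin.
have [y gy] := gsurj w.
by exists y; rewrite gy.
Qed.

Arguments ses_ge {R A B C f g a c eA eC}.

Lemma ses_length (R : comPzRingType) (A B C : lmodType R)
  (f : {linear A -> B}) (g : {linear B -> C}) a b c :
  short_exact f g -> has_length A a -> has_length B b -> has_length C c ->
  b = (a + c)%N.
Proof.
move=> Hs HA [[cb Hcb] HB] HC.
apply/eqP; rewrite eqn_leq; apply/andP; split.
  exact: ses_le Hs HA HC Hcb.
case: HA => [[cA HcA] _]; case: HC => [[cC HcC] _].
exact: (HB _ _ (ses_ge Hs HcA HcC)).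
Qed.
Arguments ses_length {R A B C f g a b c}.

Lemma signz1 (m : int) : (-1 : int) ^ (m + 1) = - (-1) ^ m.
Proof. by rewrite exprzDr ?unitrN1 // expr1z mulrN1. Qed.

Lemma signzd (d : nat) (m : int) : ~~ odd d -> (-1 : int) ^ (m + d%:Z + 1) = - (-1) ^ m.
Proof.
move=> Hd; rewrite signz1 exprzDr ?unitrN1 // -exprnP -signr_odd (negbTE Hd) expr0 mulr1 //.
Qed.

Lemma hfun_part (d : nat) (Hdeven : ~~ odd d) (lamY lamZ : int -> nat) (N : int)
  (E : forall m : int, m <= N -> (lamY (m+1))%:Z = (lamZ m)%:Z + (lamY (m + d%:Z + 1))%:Z) :
  forall n : int, n <= N - d%:Z ->
     hfun d lamZ n = hfun d lamY (n + d%:Z + 1) - hfun d lamY (n + 1).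
Proof.
move=> n Hn; rewrite /hfun -sumrB; apply: eq_bigr => i _.
have Hi : n + (i : nat)%:Z <= N.
  have := ltn_ord i; lia.
have -> : n + d%:Z + 1 + (i : nat)%:Z = (n + (i : nat)%:Z) + d%:Z + 1 by ring.
have -> : n + 1 + (i : nat)%:Z = (n + (i : nat)%:Z) + 1 by ring.
move: (n + (i : nat)%:Z) Hi => m Hm.
rewrite signzd // signz1 (E m Hm); ring.
Qed.

Arguments hfun_part {d} Hdeven {lamY lamZ N}.

Lemma iter_part (d : nat) (f g : int -> int) (N : int)
  (E : forall n : int, n <= N -> g n = - negdiff d f n) :
  forall k : nat, forall n : int, n <= N - k%:Z * (d%:Z + 1) ->
    negdiff_iter d k g n = - negdiff_iter d k.+1 f n.
Proof.
elim=> [|k IH] n Hn.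
  by apply: E; lia.
have -> : negdiff_iter d k.+2 f n = negdiff_iter d k.+1 f (n+1) - negdiff_iter d k.+1 f (n + d%:Z + 1) by [].
change (negdiff_iter d k.+1 g n) with (negdiff_iter d k g (n+1) - negdiff_iter d k g (n + d%:Z + 1)).
rewrite (IH (n+1)); last by lia.
rewrite (IH (n + d%:Z + 1)); last by lia.
ring.
Qed.

(* R0 = R^0; MY n = Hom_T(X, Sigma^n Y); MZ n = Hom_T(X, Sigma^n (Y//z));
   lamY n = lambda^n(X,Y), lamZ n = lambda^n(X, Y//z). *)
Theorem lemma5p2 (R0 : comPzRingType) (d : nat) (Hd : (2 <= d)%N) (Hdeven : ~~ odd d)
  (MY MZ : int -> lmodType R0) (lamY lamZ : int -> nat)
  (HlY : forall n, has_length (MY n) (lamY n))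
  (HlZ : forall n, has_length (MZ n) (lamZ n))
  (Hses : exists N : int, forall n : int, n <= N ->
     exists (f : {linear MZ n -> MY (n + 1)})
            (g : {linear MY (n + 1) -> MY (n + d%:Z + 1)}), short_exact f g) :
  (exists N : int, forall n : int, n <= N ->
     hfun d lamZ n = hfun d lamY (n + d%:Z + 1) - hfun d lamY (n + 1)) /\
  (forall s : nat, (1 <= s)%N -> exists N : int, forall n : int, n <= N ->
     negdiff_iter d s.-1 (hfun d lamZ) n = - negdiff_iter d s (hfun d lamY) n).
Proof.
case: Hses => N HN.
have E : forall m : int, m <= N ->
    (lamY (m+1))%:Z = (lamZ m)%:Z + (lamY (m + d%:Z + 1))%:Z.
  move=> m Hm; have [f [g Hs]] := HN m Hm.
  by rewrite (ses_length Hs (HlZ m) (HlY (m+1)) (HlY (m + d%:Z + 1))) PoszD.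
have H1 := hfun_part Hdeven E.
split; first by exists (N - d%:Z).
move=> [|k] // _.
exists (N - d%:Z - k%:Z * (d%:Z + 1)) => n Hn.
apply: (iter_part d _ _ (N - d%:Z)) => //.
move=> m Hm; rewrite H1 // /negdiff; ring.
Qed.
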